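(* Let $\lambda_1<\dots<\lambda_k$ be real, $I=(i_1,\dots,i_k)$ positive integers with sum $n$, and $\Lambda$ the diagonal matrix with $\lambda_j$ appearing $i_j$ times, in increasing order. Let $\xi_I$ be the vector field on ${\rm Fl}_I(\mathbb R)={\rm SO}(n,\mathbb R)/G$, $G={\rm SO}(n,\mathbb R)\cap({\rm O}(i_1)\times\dots\times{\rm O}(i_k))$, induced by the right-$G$-invariant vector field $M(\Psi)=\big((\Psi\Lambda\Psi^{-1})_+-(\Psi\Lambda\Psi^{-1})_-\big)\Psi$ on ${\rm SO}(n,\mathbb R)$. Then the singular points (zeros) of $\xi_I$ are indexed by the multiset permutations $S_n^I$: they are exactly the cosets $[\Psi]$ for which $\Psi\Lambda\Psi^{-1}$ is diagonal, and $\tau\in S_n^I$ corresponds to the coset $[\Psi]$ with $\Psi\Lambda\Psi^{-1}=\operatorname{diag}(\lambda_{\tau(1)},\dots,\lambda_{\tau(n)})$.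
   Context: For a square matrix $X$, $X_+$ (resp. $X_-$) is its strictly upper (resp. strictly lower) triangular part. $S_n^I$ is the set of surjective maps $\tau\colon\{1,\dots,n\}\to\{1,\dots,k\}$ with $|\tau^{-1}(j)|=i_j$ for all $j$. The coset $[\Psi]\in{\rm SO}(n,\mathbb R)/G$ determines the matrix $\Psi\Lambda\Psi^{-1}$ uniquely. *)

(* Defs.v *)
From HB Require Import structures.
From mathcomp Require Import all_boot all_order all_algebra.
From mathcomp Require Import reals.
Set Implicit Arguments. Unset Strict Implicit. Unset Printing Implicit Defensive.
Import Order.TTheory GRing.Theory Num.Theory.
Local Open Scope ring_scope.

Section Defs.
Variable R : realType.

Definition is_SO (n : nat) (Psi : 'M[R]_n) : Prop :=
  Psi *m Psi^T = 1%:M /\ \det Psi = 1.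

Definition mx_supper (n : nat) (X : 'M[R]_n) : 'M[R]_n :=
  \matrix_(p, q) (if (p < q)%N then X p q else 0).
Definition mx_slower (n : nat) (X : 'M[R]_n) : 'M[R]_n :=
  \matrix_(p, q) (if (q < p)%N then X p q else 0).

Definition Lambda_seq (k : nat) (i : 'I_k -> nat) (lam : 'I_k -> R) : seq R :=
  flatten [seq nseq (i j) (lam j) | j <- enum 'I_k].

Definition LambdaI (n k : nat) (i : 'I_k -> nat) (lam : 'I_k -> R) : 'M[R]_n :=
  diag_mx (\row_(p < n) nth 0 (Lambda_seq i lam) p).

Definition block_labels (k : nat) (i : 'I_k -> nat) : seq nat :=
  flatten [seq nseq (i j) (val j) | j <- enum 'I_k].

Definition block_diag (n k : nat) (i : 'I_k -> nat) (X : 'M[R]_n) : Prop :=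
  forall p q : 'I_n,
    nth 0%N (block_labels i) p != nth 0%N (block_labels i) q -> X p q = 0.

Definition in_G (n k : nat) (i : 'I_k -> nat) (g : 'M[R]_n) : Prop :=
  is_SO g /\ block_diag i g.

Definition in_lieG (n k : nat) (i : 'I_k -> nat) (X : 'M[R]_n) : Prop :=
  X^T = - X /\ block_diag i X.

Definition same_coset (n k : nat) (i : 'I_k -> nat) (Psi Psi' : 'M[R]_n) : Prop :=
  in_G i (invmx Psi *m Psi').

Definition toda_field (n : nat) (Lam Psi : 'M[R]_n) : 'M[R]_n :=
  let L := Psi *m Lam *m invmx Psi in (mx_supper L - mx_slower L) *m Psi.

(* the induced vector field xi_I on SO(n)/G vanishes at [Psi] iff M(Psi)
   lies in the kernel of d pi at Psi, i.e. the tangent space Psi * Lie(G)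
   of the fibre Psi G *)
Definition xi_zero (n k : nat) (i : 'I_k -> nat) (lam : 'I_k -> R)
  (Psi : 'M[R]_n) : Prop :=
  exists X : 'M[R]_n, in_lieG i X /\ toda_field (LambdaI n i lam) Psi = Psi *m X.

Definition is_SnI (n k : nat) (i : 'I_k -> nat) (tau : {ffun 'I_n -> 'I_k}) : Prop :=
  (forall j : 'I_k, exists p : 'I_n, tau p = j) /\
  (forall j : 'I_k, #|[pred p | tau p == j]| = i j).

Definition diag_tau (n k : nat) (lam : 'I_k -> R) (tau : {ffun 'I_n -> 'I_k})
  : 'M[R]_n := diag_mx (\row_(p < n) lam (tau p)).

End Defs.

(* Main.v *)
Require Import Defs.
From HB Require Import structures.
From mathcomp Require Import all_boot all_order all_algebra.
From mathcomp Require Import reals.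
From mathcomp Require Import ring.
From mathcomp Require Import perm.
Import Order.TTheory GRing.Theory Num.Theory.
Local Open Scope ring_scope.
Set Implicit Arguments. Unset Strict Implicit. Unset Printing Implicit Defensive.

Lemma card_count n (g : 'I_n -> nat) (a : pred nat) :
  #|[pred p | a (g p)]| = count a (map g (enum 'I_n)).
Proof.
rewrite count_map cardE /enum_mem size_filter.
by rewrite (@eq_filter _ _ predT) ?filter_predT.
Qed.

Lemma size_labels k (i : 'I_k -> nat) : size (block_labels i) = (\sum_(j < k) i j)%N.
Proof.
rewrite /block_labels size_flatten /shape -map_comp sumnE big_map big_enum /=.
by apply: eq_bigr => j _; rewrite /= size_nseq.
Qed.

Lemma labels_lt k (i : 'I_k -> nat) x : x \in block_labels i -> (x < k)%N.
Proof.
case/flattenP => s /mapP [j _ ->]; rewrite mem_nseq => /andP [_ /eqP ->].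
exact: ltn_ord.
Qed.

Lemma count_labels k (i : 'I_k -> nat) (j : 'I_k) :
  count (pred1 (val j)) (block_labels i) = i j.
Proof.
rewrite /block_labels count_flatten sumnE -map_comp big_map big_enum /=.
rewrite (bigD1 j) //= count_nseq /= eqxx mul1n big1 ?addn0 // => j' hj'.
by rewrite count_nseq /= (inj_eq val_inj) (negbTE hj').
Qed.

Lemma map_nth_labels n k (i : 'I_k -> nat) :
  size (block_labels i) = n ->
  map (fun p : 'I_n => nth 0%N (block_labels i) p) (enum 'I_n) = block_labels i.
Proof.
move=> hs.
have -> : map (fun p : 'I_n => nth 0%N (block_labels i) p) (enum 'I_n)
   = map (nth 0%N (block_labels i)) (map val (enum 'I_n)) by rewrite -map_comp.
by rewrite val_enum_ord map_nth_iota0 ?hs // -hs take_size.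
Qed.

Definition lamf (R : realType) k (lam : 'I_k -> R) (m : nat) : R :=
  if insub m is Some j then lam j else 0.

Lemma Lambda_seqE (R : realType) k (i : 'I_k -> nat) (lam : 'I_k -> R) :
  Lambda_seq i lam = map (lamf lam) (block_labels i).
Proof.
rewrite /Lambda_seq /block_labels map_flatten -map_comp.
congr flatten; apply: eq_map => j /=.
by rewrite map_nseq /lamf valK.
Qed.

Lemma LambdaE (R : realType) n k (i : 'I_k -> nat) (lam : 'I_k -> R) :
  size (block_labels i) = n ->
  LambdaI n i lam = diag_mx (\row_(p < n) lamf lam (nth 0%N (block_labels i) p)).
Proof.
move=> hs; rewrite /LambdaI; congr diag_mx; apply/rowP => p; rewrite !mxE.
by rewrite Lambda_seqE (nth_map 0%N) // hs.
Qed.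

Lemma lamfE (R : realType) k (lam : 'I_k -> R) a (ha : (a < k)%N) :
  lamf lam a = lam (Ordinal ha).
Proof.
rewrite /lamf; case: insubP => [j _ hj|]; last by rewrite ha.
by congr lam; apply: val_inj.
Qed.

Lemma lamf_inj (R : realType) k (lam : 'I_k -> R) :
  (forall j1 j2 : 'I_k, (j1 < j2)%N -> lam j1 < lam j2) ->
  forall a b, (a < k)%N -> (b < k)%N -> lamf lam a = lamf lam b -> a = b.
Proof.
move=> hl a b ha hb; rewrite (lamfE lam ha) (lamfE lam hb).
move=> e; case: (ltngtP a b) => // h.
  by have := hl (Ordinal ha) (Ordinal hb) h; rewrite e ltxx.
by have := hl (Ordinal hb) (Ordinal ha) h; rewrite e ltxx.
Qed.

Lemma SO_inv (R : realType) n (Psi : 'M[R]_n) :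
  is_SO Psi -> invmx Psi = Psi^T /\ Psi^T *m Psi = 1%:M.
Proof.
case=> h1 hd; have hu : Psi \in unitmx by rewrite unitmxE hd unitr1.
split; last exact: mulmx1C.
by rewrite -[invmx Psi]mulmx1 -h1 mulmxA mulVmx // mul1mx.
Qed.

Lemma lab_lt n k (i : 'I_k -> nat) (p : 'I_n) :
  size (block_labels i) = n -> (nth 0%N (block_labels i) p < k)%N.
Proof. by move=> hs; apply: labels_lt; apply: mem_nth; rewrite hs. Qed.

Lemma comm_block (R : realType) n k (i : 'I_k -> nat) (lam : 'I_k -> R) (X : 'M[R]_n) :
  size (block_labels i) = n ->
  (forall j1 j2 : 'I_k, (j1 < j2)%N -> lam j1 < lam j2) ->
  (X *m LambdaI n i lam = LambdaI n i lam *m X) <-> block_diag i X.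
Proof.
move=> hs hl; rewrite LambdaE // mul_mx_diag mul_diag_mx; split.
  move=> e p q hpq; move/matrixP: e => /(_ p q); rewrite !mxE => e'.
  have /eqP : X p q * (lamf lam (nth 0%N (block_labels i) q)
                 - lamf lam (nth 0%N (block_labels i) p)) = 0.
    by rewrite mulrBr e' mulrC subrr.
  rewrite mulf_eq0 => /orP [/eqP //|]; rewrite subr_eq0.
  move=> /eqP /(lamf_inj hl (lab_lt q hs) (lab_lt p hs)) h.
  by rewrite h eqxx in hpq.
move=> hb; apply/matrixP => p q; rewrite !mxE.
case: (eqVneq (nth 0%N (block_labels i) p) (nth 0%N (block_labels i) q)) => h.
  by rewrite h mulrC.
by rewrite hb // mul0r mulr0.
Qed.

Lemma toda_diag (R : realType) n (L : 'M[R]_n) : L^T = L ->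
  (mx_supper L - mx_slower L) *m L = L *m (mx_supper L - mx_slower L) ->
  is_diag_mx L.
Proof.
set B := mx_supper L - mx_slower L => hsym hc.
have sym p q : L q p = L p q by rewrite -{1}hsym mxE.
have hd p : \sum_q (B p q * L q p - L p q * B q p) = 0.
  move/matrixP: hc => /(_ p p); rewrite !mxE sumrB => ->; exact: subrr.
have key : forall m (p : 'I_n), val p = m -> forall q, q != p -> L p q = 0.
  elim/ltn_ind => m IH p hpm.
  have hlow (q : 'I_n) : (q < p)%N -> L p q = 0.
    move=> hqp; rewrite -sym; apply: (IH q) => //; first by rewrite -hpm.
    by apply/eqP => e; rewrite e ltnn in hqp.
  have hterm (q : 'I_n) : B p q * L q p - L p q * B q p
                 = if (p < q)%N then (L p q * L p q) *+ 2 else 0.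
    rewrite /B !mxE; case: (ltngtP p q) => h.
    - rewrite (sym p q); ring.
    - rewrite (sym p q) hlow //; ring.
    - ring.
  have hs : \sum_(q : 'I_n) (if (p < q)%N then (L p q * L p q) *+ 2 else 0) = 0.
    by rewrite -[RHS](hd p); apply: eq_bigr => q _; rewrite (hterm q).
  move=> q hqp; case: (ltngtP p q) => h.
  - have hnn (r : 'I_n) : true -> 0 <= (if (p < r)%N then L p r * L p r *+ 2 else 0).
      by move=> _; case: ifP => // _; apply: mulrn_wge0; by rewrite -expr2 sqr_ge0.
    have := psumr_eq0P hnn hs (i := q) isT.
    rewrite h => /eqP; rewrite mulrn_eq0 /= mulf_eq0 orbb => /eqP //.
  - exact: hlow.
  - have e : q = p by apply: val_inj; rewrite /= h.
    by rewrite e eqxx in hqp.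
apply/is_diag_mxP => p q hpq; apply: (key _ p erefl).
by rewrite eq_sym.
Qed.

Lemma Lambda_tr (R : realType) n k (i : 'I_k -> nat) (lam : 'I_k -> R) :
  (LambdaI n i lam)^T = LambdaI n i lam.
Proof. by rewrite /LambdaI tr_diag_mx. Qed.

Lemma part1 (R : realType) n k (i : 'I_k -> nat) (lam : 'I_k -> R) :
  size (block_labels i) = n ->
  (forall j1 j2 : 'I_k, (j1 < j2)%N -> lam j1 < lam j2) ->
  forall Psi : 'M[R]_n, is_SO Psi ->
    (xi_zero i lam Psi <-> is_diag_mx (Psi *m LambdaI n i lam *m invmx Psi)).
Proof.
move=> hs hl Psi hSO; have [hinv hTP] := SO_inv hSO; have [hPT _] := hSO.
rewrite /xi_zero /toda_field hinv.
set Lam := LambdaI n i lam; set L := Psi *m Lam *m Psi^T.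
split.
  case=> X [[_ hbd] heq].
  have hc : X *m Lam = Lam *m X by apply/comm_block.
  have hB : mx_supper L - mx_slower L = Psi *m X *m Psi^T by rewrite -heq -mulmxA hPT mulmx1.
  apply: toda_diag.
    by rewrite /L !trmx_mul trmxK Lambda_tr mulmxA.
  rewrite hB /L.
  rewrite !mulmxA -[Psi *m X *m Psi^T *m Psi]mulmxA hTP mulmx1.
  rewrite -[Psi *m X *m Lam]mulmxA hc mulmxA.
  by rewrite -[Psi *m Lam *m Psi^T *m Psi]mulmxA hTP mulmx1.
move=> hd; exists 0; split.
  split; first by rewrite trmx0 oppr0.
  by move=> p q _; rewrite mxE.
have -> : mx_supper L = 0.
  apply/matrixP => p q; rewrite [LHS]mxE [RHS]mxE; case: ifP => // h.
  by apply: (is_diag_mxP hd); rewrite neq_ltn h.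
have -> : mx_slower L = 0.
  apply/matrixP => p q; rewrite [LHS]mxE [RHS]mxE; case: ifP => // h.
  by apply: (is_diag_mxP hd); rewrite neq_ltn h orbT.
by rewrite subrr mul0mx mulmx0.
Qed.

Lemma part3 (R : realType) n k (i : 'I_k -> nat) (lam : 'I_k -> R) :
  size (block_labels i) = n ->
  (forall j1 j2 : 'I_k, (j1 < j2)%N -> lam j1 < lam j2) ->
  forall Psi Psi' : 'M[R]_n, is_SO Psi -> is_SO Psi' ->
  Psi *m LambdaI n i lam *m invmx Psi = Psi' *m LambdaI n i lam *m invmx Psi' ->
  same_coset i Psi Psi'.
Proof.
move=> hs hl Psi Psi' h1 h2; have [hinv hTP] := SO_inv h1; have [hPT hd] := h1.
have [hinv' hTP'] := SO_inv h2; have [hPT' hd'] := h2.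
rewrite hinv hinv' /same_coset hinv => E.
set Lam := LambdaI n i lam in E *.
split; last first.
  apply/(@comm_block R n k i lam _ hs hl).
  have := congr1 (fun M => Psi^T *m M *m Psi') E.
  rewrite !mulmxA hTP mul1mx -!mulmxA hTP' mulmx1 => e.
  by rewrite e.
split.
  rewrite trmx_mul trmxK mulmxA -[Psi^T *m Psi' *m Psi'^T]mulmxA hPT' mulmx1.
  exact: hTP.
by rewrite det_mulmx det_tr hd hd' mulr1.
Qed.

Lemma sum_bool_card (R : realType) n (P : pred 'I_n) :
  \sum_(q < n) (((P q : nat)%:R) : R) = (#|[pred q | P q]|)%:R.
Proof.
rewrite -natr_sum; congr (_%:R); rewrite -sum1_card big_mkcond /=.
rewrite [RHS]big_mkcond /=; apply: eq_bigr => q _; rewrite unfold_in /=; by case: (P q).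
Qed.

Lemma card_lab n k (i : 'I_k -> nat) (j : 'I_k) :
  size (block_labels i) = n ->
  #|[pred q : 'I_n | nth 0%N (block_labels i) q == val j]| = i j.
Proof.
move=> hs.
rewrite (card_count (fun q : 'I_n => nth 0%N (block_labels i) q) (pred1 (val j))).
by rewrite map_nth_labels // count_labels.
Qed.

Lemma lam_inj (R : realType) k (lam : 'I_k -> R) :
  (forall j1 j2 : 'I_k, (j1 < j2)%N -> lam j1 < lam j2) -> injective lam.
Proof.
move=> hl a b e; apply: val_inj; case: (ltngtP a b) => // h.
  by have := hl a b h; rewrite e ltxx.
by have := hl b a h; rewrite e ltxx.
Qed.

Lemma part4 (R : realType) n k (i : 'I_k -> nat) (lam : 'I_k -> R) :
  (forall j : 'I_k, (0 < i j)%N) ->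
  size (block_labels i) = n ->
  (forall j1 j2 : 'I_k, (j1 < j2)%N -> lam j1 < lam j2) ->
  forall Psi : 'M[R]_n, is_SO Psi ->
  is_diag_mx (Psi *m LambdaI n i lam *m invmx Psi) ->
  exists! tau : {ffun 'I_n -> 'I_k}, is_SnI i tau /\
          Psi *m LambdaI n i lam *m invmx Psi = diag_tau lam tau.
Proof.
move=> hpos hs hl Psi hSO hdiag; have [hinv hTP] := SO_inv hSO; have [hPT _] := hSO.
rewrite hinv in hdiag *.
set Lam := LambdaI n i lam in hdiag *; set D := Psi *m Lam *m Psi^T in hdiag *.
case/diag_mxP: hdiag => d hD.
have hDP : diag_mx d *m Psi = Psi *m Lam by rewrite -hD /D -mulmxA hTP mulmx1.
have hrel p q : Psi p q != 0 -> d 0 p = lamf lam (nth 0%N (block_labels i) q).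
  move=> hnz; move/matrixP: hDP => /(_ p q).
  rewrite mul_diag_mx /Lam LambdaE // mul_mx_diag !mxE => e.
  by apply: (mulIf hnz); rewrite e mulrC.
have hrow p : exists q, Psi p q != 0.
  case: (pickP (fun q => Psi p q != 0)) => [q hq|h]; first by exists q.
  exfalso; move/matrixP: hPT => /(_ p p); rewrite !mxE big1 ?eqxx.
    by move=> /eqP; rewrite eq_sym oner_eq0.
  by move=> q _; have := h q => /negbFE/eqP ->; rewrite mul0r.
pose qf p := odflt p [pick q | Psi p q != 0].
have hqf p : Psi p (qf p) != 0.
  rewrite /qf; case: pickP => //= h; case: (hrow p) => q hq.
  by have := h q; rewrite hq.
have hlab p q : Psi p q != 0 ->
    nth 0%N (block_labels i) q = nth 0%N (block_labels i) (qf p).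
  move=> hpq; apply: (lamf_inj hl (lab_lt q hs) (lab_lt (qf p) hs)).
  by rewrite -(hrel p q hpq) -(hrel p (qf p) (hqf p)).
pose tau := [ffun p => Ordinal (lab_lt (qf p) hs)].
have htau p : lam (tau p) = d 0 p.
  by rewrite ffunE (hrel p (qf p) (hqf p)) (lamfE lam (lab_lt (qf p) hs)).
have hDt : D = diag_tau lam tau.
  by rewrite hD /diag_tau; congr diag_mx; apply/rowP => p; rewrite !mxE htau.
have hc j : #|[pred p | tau p == j]| = i j.
  pose E := diag_mx (\row_p (((tau p == j) : nat)%:R : R)).
  pose F := diag_mx (\row_(q < n) (((nth 0%N (block_labels i) q == val j) : nat)%:R : R)).
  have hPF : Psi *m F = E *m Psi.
    apply/matrixP => p q; rewrite mul_mx_diag mul_diag_mx !mxE.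
    case: (eqVneq (Psi p q) 0) => [->|hnz]; first by rewrite mul0r mulr0.
    by rewrite (hlab p q hnz) ffunE mulrC.
  have htr : \tr F = \tr E.
    rewrite -[F]mul1mx -hTP -mulmxA hPF mxtrace_mulC -mulmxA hPT mulmx1.
    by [].
  have trF : \tr F = (#|[pred q : 'I_n | nth 0%N (block_labels i) q == val j]|)%:R.
    by rewrite mxtrace_diag -sum_bool_card; apply: eq_bigr => q _; rewrite mxE.
  have trE : \tr E = (#|[pred p | tau p == j]|)%:R.
    by rewrite mxtrace_diag -sum_bool_card; apply: eq_bigr => q _; rewrite mxE.
  rewrite trF trE in htr.
  move/eqP: htr; rewrite eqr_nat => /eqP <-.
  exact: card_lab.
exists tau; split.
  split => //; split => // j.
  have := hpos j; rewrite -hc => /card_gt0P [p hp]; exists p.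
  by apply/eqP; move: hp; rewrite unfold_in.
move=> tau' [_ e']; apply/ffunP => p; apply: (lam_inj hl).
move: e'; rewrite hDt => /matrixP /(_ p p); rewrite !mxE eqxx !mulr1n.
by [].
Qed.

Lemma perm_exists n k (i : 'I_k -> nat) (tau : {ffun 'I_n -> 'I_k}) :
  size (block_labels i) = n ->
  (forall j : 'I_k, #|[pred p | tau p == j]| = i j) ->
  exists sg : 'S_n, forall p, val (tau p) = nth 0%N (block_labels i) (sg p).
Proof.
move=> hs hc.
have hs' : size (block_labels i) == n by rewrite hs.
pose t : n.-tuple nat := Tuple hs'.
pose s1 := [seq val (tau p) | p <- enum 'I_n].
have hcnt x : count_mem x s1 = count_mem x (block_labels i).
  rewrite /s1 -(card_count (fun p => val (tau p)) (pred1 x)).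
  case: (ltnP x k) => hx.
    rewrite -[x]/(val (Ordinal hx)) count_labels -hc.
    by apply: eq_card => p; rewrite !unfold_in.
  have -> : count_mem x (block_labels i) = 0%N.
    by apply/count_memPn/negP => /labels_lt; rewrite ltnNge hx.
  apply: eq_card0 => p; rewrite !unfold_in /=; apply/negbTE.
  by rewrite neq_ltn (leq_trans (ltn_ord _) hx).
have hpe : perm_eq s1 t by apply/allP => x _; rewrite /= hcnt.
case/tuple_permP: hpe => sg e; exists sg => p.
have := congr1 (fun s => nth 0%N s p) e.
rewrite nth_mktuple -(tnth_nth 0%N) tnth_mktuple (tnth_nth 0%N).
by [].
Qed.

Lemma prod_first (R : realType) n (a : R) :
  \prod_(p < n) (if val p == 0%N then a else 1) = if n is 0 then 1 else a.
Proof.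
case: n => [|n]; first by rewrite big_ord0.
by rewrite big_ord_recl /= big1 ?mulr1.
Qed.

Lemma odd0 (sg : 'S_0) : odd_perm sg = false.
Proof.
have -> : sg = 1%g by apply/permP => -[].
exact: odd_perm1.
Qed.

Lemma sign_key (R : realType) m (s : 'S_m) :
  (if m is 0 then 1 else (-1) ^+ odd_perm s) * (-1) ^+ odd_perm s = 1 :> R.
Proof.
case: m s => [|m] s; first by rewrite odd0 mul1r expr0.
by case: (odd_perm s); rewrite ?expr0 ?expr1 ?mulr1 ?mulrNN ?mulr1.
Qed.

Lemma lamf_val (R : realType) k (lam : 'I_k -> R) (j : 'I_k) : lamf lam (val j) = lam j.
Proof. by rewrite /lamf valK. Qed.

Lemma part2 (R : realType) n k (i : 'I_k -> nat) (lam : 'I_k -> R) :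
  size (block_labels i) = n ->
  forall tau : {ffun 'I_n -> 'I_k}, is_SnI i tau ->
  exists Psi : 'M[R]_n, is_SO Psi /\
          Psi *m LambdaI n i lam *m invmx Psi = diag_tau lam tau.
Proof.
move=> hs tau [_ hc]; case: (perm_exists hs hc) => sg hsg.
pose c := \row_(p < n) (if val p == 0%N then (-1) ^+ odd_perm sg else 1 : R).
have hcc p : c 0 p * c 0 p = 1.
  rewrite mxE; case: ifP => _; rewrite ?mulr1 //.
  by case: (odd_perm sg); rewrite ?expr0 ?expr1 ?mulr1 ?mulrNN ?mulr1.
pose P := perm_mx sg : 'M[R]_n.
pose Psi := diag_mx c *m P.
have hPP : P *m P^T = 1%:M by rewrite /P tr_perm_mx -perm_mxM mulgV perm_mx1.
have hcc' : diag_mx c *m diag_mx c = 1%:M.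
  rewrite mulmx_diag; apply/matrixP => p q; rewrite [LHS]mxE [RHS]mxE.
  by rewrite [X in X *+ _]mxE hcc.
have hSO : is_SO Psi.
  split.
    rewrite /Psi trmx_mul tr_diag_mx mulmxA -[diag_mx c *m P *m P^T]mulmxA hPP.
    by rewrite mulmx1 hcc'.
  rewrite /Psi det_mulmx det_diag det_perm.
  rewrite (eq_bigr (fun p : 'I_n => if val p == 0%N then (-1) ^+ odd_perm sg else 1)).
    by rewrite prod_first sign_key.
  by move=> p _; rewrite mxE.
exists Psi; split => //; have [hinv _] := SO_inv hSO; rewrite hinv.
rewrite LambdaE //; set e := \row_p _.
have hPd : P *m diag_mx e = diag_mx (\row_p e 0 (sg p)) *m P.
  apply/matrixP => p q; rewrite mul_mx_diag mul_diag_mx /P !mxE.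
  case: (eqVneq (sg p) q) => [<-|h]; first by rewrite mulr1n mulr1 mul1r.
  by rewrite mul0r mulr0.
rewrite /Psi trmx_mul tr_diag_mx.
rewrite -[diag_mx c *m P *m diag_mx e]mulmxA hPd.
rewrite !mulmxA -[diag_mx c *m diag_mx _ *m P *m P^T]mulmxA hPP mulmx1.
rewrite !mulmx_diag /diag_tau; congr diag_mx; apply/rowP => p; rewrite !mxE.
rewrite mulrAC -(hsg p) lamf_val; case: ifP => _; last by rewrite !mulr1 mul1r.
by case: (odd_perm sg); rewrite ?expr0 ?expr1 ?mulr1 ?mulrNN ?mul1r.
Qed.

Theorem proposition4p1 (R : realType) (n k : nat) (i : 'I_k -> nat)
  (lam : 'I_k -> R) :
  (forall j : 'I_k, (0 < i j)%N) ->
  (\sum_(j < k) i j)%N = n ->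
  (forall j1 j2 : 'I_k, (j1 < j2)%N -> lam j1 < lam j2) ->
  [/\ (* zeros of xi_I are exactly the cosets with Psi Lambda Psi^-1 diagonal *)
      forall Psi : 'M[R]_n, is_SO Psi ->
        (xi_zero i lam Psi <->
         is_diag_mx (Psi *m LambdaI n i lam *m invmx Psi)),
      (* every tau in S_n^I is realized by some coset *)
      forall tau : {ffun 'I_n -> 'I_k}, is_SnI i tau ->
        exists Psi : 'M[R]_n, is_SO Psi /\
          Psi *m LambdaI n i lam *m invmx Psi = diag_tau lam tau,
      (* ... by exactly one coset *)
      forall (tau : {ffun 'I_n -> 'I_k}) (Psi Psi' : 'M[R]_n),
        is_SnI i tau -> is_SO Psi -> is_SO Psi' ->
        Psi *m LambdaI n i lam *m invmx Psi = diag_tau lam tau ->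
        Psi' *m LambdaI n i lam *m invmx Psi' = diag_tau lam tau ->
        same_coset i Psi Psi' &
      (* and every zero corresponds to exactly one tau in S_n^I *)
      forall Psi : 'M[R]_n, is_SO Psi -> xi_zero i lam Psi ->
        exists! tau : {ffun 'I_n -> 'I_k}, is_SnI i tau /\
          Psi *m LambdaI n i lam *m invmx Psi = diag_tau lam tau].
Proof.
move=> hpos hsum hl.
have hs : size (block_labels i) = n by rewrite size_labels.
split.
- exact: part1.
- exact: part2.
- move=> tau Psi Psi' _ h1 h2 e1 e2; apply: (part3 hs hl h1 h2).
  by rewrite e1 e2.
- move=> Psi hSO hz; apply: part4 => //.
  by apply/(part1 hs hl hSO).
Qed.
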